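(* Let $c>0$, $k>0$, and $\beta\in(0,1)$, and put $v=\beta c$ and $\gamma=(1-\beta^2)^{-1/2}$. Let $r:[0,\pi]\to(0,\infty)$ be the radial function of an axially symmetric cavity boundary, where the boundary is the surface of revolution $\{\,r(\theta)\,\hat{\mathbf n}\;:\;\hat{\mathbf n}\in S^2,\ \hat{\mathbf n}\cdot\hat{\mathbf x}=\cos\theta\,\}$ about the $x$-axis, with $\hat{\mathbf x}$ the unit vector along the $x$-axis. For each $\theta\in[0,\pi]$ let $\Delta t_{\mathrm{out}}(\theta)$ be the positive root $t$ of $$(c^2-v^2)\,t^2-2\,r(\theta)\,v\cos\theta\;t-r(\theta)^2=0,$$ let $\Delta t_{\mathrm{ret}}(\theta)$ be the positive root $t$ of $$(c^2-v^2)\,t^2+2\,r(\theta)\,v\cos\theta\;t-r(\theta)^2=0,$$ and define the round-trip phase $\Phi(\theta)=c\,k\,\bigl(\Delta t_{\mathrm{out}}(\theta)+\Delta t_{\mathrm{ret}}(\theta)\bigr)$. Assume $\Phi(\theta)$ is independent of $\theta\in[0,\pi]$. Then, with $a_\perp:=r(\pi/2)$, $$r(\theta)=\frac{a_\perp\sqrt{1-\beta^2}}{\sqrt{1-\beta^2\sin^2\theta}}\qquad\text{for all }\theta\in[0,\pi].$$ Equivalently, the boundary is the ellipsoid of revolution $$\frac{x^2}{(a_\perp/\gamma)^2}+\frac{y^2+z^2}{a_\perp^2}=1,$$ whose longitudinal semiaxis is $a_\parallel:=r(0)=a_\perp/\gamma$; in particular $$\frac{a_\parallel}{a_\perp}=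\frac1\gamma=\sqrt{1-\beta^2}.$$
   Context: Physical setting: a medium at rest supports nondispersive waves ($\omega=ck$) propagating isotropically at speed $c$ in the medium's rest frame. A cavity moves uniformly through the medium with velocity $v\hat{\mathbf x}$, $v=\beta c$. The boundary is described in the medium frame by the distance $r(\theta)$ from the cavity center to the boundary along a direction making angle $\theta$ with the direction of motion $\hat{\mathbf x}$. $\Delta t_{\mathrm{out}}(\theta)$ is the travel time of a wave emitted from the moving center to reach the co-moving boundary point in direction $\theta$ (wavefront distance $c\,\Delta t$ equals the distance to the translated boundary point), and $\Delta t_{\mathrm{ret}}(\theta)$ is the travel time for the return from that boundary point to the moving center; the defining quadratics above encode exactly these pursuit conditions. The requirement that $\Phi$ be independent of $\theta$ is called spherical-harmonic phase closure. *)

(* Defs.v *)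
From Stdlib Require Import Reals.
Open Scope R_scope.

Definition lorentz_gamma (beta : R) : R := / sqrt (1 - beta ^ 2).

Definition is_dt_out (c v rth th t : R) : Prop :=
  0 < t /\ (c ^ 2 - v ^ 2) * t ^ 2 - 2 * rth * v * cos th * t - rth ^ 2 = 0.

Definition is_dt_ret (c v rth th t : R) : Prop :=
  0 < t /\ (c ^ 2 - v ^ 2) * t ^ 2 + 2 * rth * v * cos th * t - rth ^ 2 = 0.

(* Main.v *)
Require Import Defs.
From Stdlib Require Import Reals Lra Psatz.
Open Scope R_scope.

Lemma key (A b r t1 t2 : R) : 0 < A -> 0 < r -> 0 < t1 -> 0 < t2 ->
  A * t1 ^ 2 - 2 * b * t1 - r ^ 2 = 0 ->
  A * t2 ^ 2 + 2 * b * t2 - r ^ 2 = 0 ->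
  (A * (t1 + t2) / 2) ^ 2 = b ^ 2 + A * r ^ 2.
Proof.
  intros HA Hr H1 H2 E1 E2.
  assert (h1 : 0 < A * t1 - b).
  { destruct (Rlt_or_le 0 (A * t1 - b)) as [h|h]; auto.
    exfalso. assert (0 < A * t1) by nra. nra. }
  assert (h2 : 0 < A * t2 + b).
  { destruct (Rlt_or_le 0 (A * t2 + b)) as [h|h]; auto.
    exfalso. assert (0 < A * t2) by nra. nra. }
  assert (s1 : (A * t1 - b) ^ 2 = b ^ 2 + A * r ^ 2) by nra.
  assert (s2 : (A * t2 + b) ^ 2 = b ^ 2 + A * r ^ 2) by nra.
  assert (e : A * t1 - b = A * t2 + b) by nra.
  replace (A * (t1 + t2) / 2) with (A * t1 - b) by lra. exact s1.
Qed.

Theorem theorem1 (c k beta : R) (r dt_out dt_ret : R -> R)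
  (hc : 0 < c) (hk : 0 < k) (hb0 : 0 < beta) (hb1 : beta < 1)
  (hr : forall th, 0 <= th <= PI -> 0 < r th)
  (hout : forall th, 0 <= th <= PI -> is_dt_out c (beta * c) (r th) th (dt_out th))
  (hret : forall th, 0 <= th <= PI -> is_dt_ret c (beta * c) (r th) th (dt_ret th))
  (hclosure : exists Phi0 : R, forall th, 0 <= th <= PI ->
       c * k * (dt_out th + dt_ret th) = Phi0) :
  let a_perp := r (PI / 2) in
  let gam := lorentz_gamma beta in
  (forall th, 0 <= th <= PI ->
     r th = a_perp * sqrt (1 - beta ^ 2) / sqrt (1 - beta ^ 2 * (sin th) ^ 2)) /\
  (forall th, 0 <= th <= PI ->
     (r th * cos th) ^ 2 / (a_perp / gam) ^ 2 + (r th * sin th) ^ 2 / a_perp ^ 2 = 1) /\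
  r 0 = a_perp / gam /\
  r 0 / a_perp = / gam /\
  r 0 / a_perp = sqrt (1 - beta ^ 2).
Proof.
  intros a gam.
  destruct hclosure as [P0 HP].
  set (A := c ^ 2 - (beta * c) ^ 2).
  assert (HA : 0 < A).
  { assert (0 < 1 - beta ^ 2) by nra. unfold A. replace (c ^ 2 - (beta * c) ^ 2) with (c ^ 2 * (1 - beta ^ 2)) by ring. apply Rmult_lt_0_compat; [nra|lra]. }
  assert (Hpi : 0 <= PI / 2 <= PI) by (pose proof PI_RGT_0; lra).
  assert (Sq : forall th, 0 <= th <= PI ->
     (A * (dt_out th + dt_ret th) / 2) ^ 2 = r th ^ 2 * c ^ 2 * (1 - beta ^ 2 * sin th ^ 2)).
  { intros th Hth. destruct (hout th Hth) as [o1 o2]. destruct (hret th Hth) as [r1 r2].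
    rewrite (key A (r th * (beta * c) * cos th) (r th) _ _ HA (hr th Hth) o1 r1).
    - pose proof (sin2_cos2 th). unfold A. unfold Rsqr in *. nra.
    - unfold A. rewrite <- o2. ring.
    - unfold A. rewrite <- r2. ring. }
  assert (Same : forall th, 0 <= th <= PI -> dt_out th + dt_ret th = dt_out (PI/2) + dt_ret (PI/2)).
  { intros th Hth. pose proof (HP th Hth). pose proof (HP _ Hpi).
    assert (0 < c * k) by nra.
    apply (Rmult_eq_reg_l (c * k)); [lra | lra]. }
  assert (Main : forall th, 0 <= th <= PI ->
     r th ^ 2 * (1 - beta ^ 2 * sin th ^ 2) = a ^ 2 * (1 - beta ^ 2)).
  { intros th Hth. pose proof (Sq th Hth) as S1. pose proof (Sq _ Hpi) as S2.
    rewrite (Same th Hth) in S1. rewrite S1 in S2. rewrite sin_PI2 in S2.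
    unfold a. apply (Rmult_eq_reg_l (c ^ 2)); [|nra]. nra. }
  assert (Ha : 0 < a) by (apply hr; exact Hpi).
  set (s := sqrt (1 - beta ^ 2)).
  assert (Hs : 0 < s) by (apply sqrt_lt_R0; nra).
  assert (Hs2 : s * s = 1 - beta ^ 2) by (apply sqrt_sqrt; nra).
  assert (Hg : a / gam = a * s) by (unfold gam, lorentz_gamma; fold s; field; lra).
  assert (Hr0 : r 0 = a * s).
  { assert (H0 : 0 <= 0 <= PI) by (pose proof PI_RGT_0; lra).
    pose proof (Main 0 H0) as M. rewrite sin_0 in M. pose proof (hr 0 H0).
    assert (E : (r 0 - a * s) * (r 0 + a * s) = 0) by (rewrite <- Hs2 in M; nra).
    assert (0 < r 0 + a * s) by nra.
    apply Rmult_integral in E. lra. }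
  split; [|split; [|split; [|split]]].
  - intros th Hth. pose proof (Main th Hth) as M. pose proof (hr th Hth).
    pose proof (SIN_bound th) as [Hb1 Hb2].
    assert (Hq : 0 < 1 - beta ^ 2 * sin th ^ 2).
    { assert (sin th ^ 2 <= 1) by nra. nra. }
    set (q := sqrt (1 - beta ^ 2 * sin th ^ 2)) in *.
    assert (Hq0 : 0 < q) by (apply sqrt_lt_R0; lra).
    assert (Hq2 : q * q = 1 - beta ^ 2 * sin th ^ 2) by (apply sqrt_sqrt; lra).
    apply (Rmult_eq_reg_r q); [|lra]. unfold Rdiv. rewrite Rmult_assoc, Rinv_l by lra.
    rewrite Rmult_1_r.
    assert (0 < r th * q) by nra. assert (0 < a * s) by nra. nra.
  - intros th Hth. rewrite Hg. pose proof (Main th Hth) as M.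
    pose proof (sin2_cos2 th) as SC. unfold Rsqr in SC.
    assert (Hb : 0 < 1 - beta ^ 2) by nra.
    replace ((a * s) ^ 2) with (a ^ 2 * (1 - beta ^ 2)) by (rewrite <- Hs2; ring).
    replace ((r th * cos th) ^ 2 / (a ^ 2 * (1 - beta ^ 2)) + (r th * sin th) ^ 2 / a ^ 2)
      with ((r th ^ 2 * (cos th * cos th) + r th ^ 2 * sin th ^ 2 * (1 - beta ^ 2)) / (a ^ 2 * (1 - beta ^ 2)))
      by (field; lra).
    replace (cos th * cos th) with (1 - sin th * sin th) by lra.
    replace (r th ^ 2 * (1 - sin th * sin th) + r th ^ 2 * sin th ^ 2 * (1 - beta ^ 2))
      with (r th ^ 2 * (1 - beta ^ 2 * sin th ^ 2)) by ring.
    rewrite M. field. lra.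
  - rewrite Hg; exact Hr0.
  - rewrite Hr0. unfold gam, lorentz_gamma. fold s. field. lra.
  - rewrite Hr0. fold s. field. lra.
Qed.
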